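(* Let $(G_1,G_2)$ be a two-player game in which each player has two strategies $A,B$, with payoffs $G_1=\begin{bmatrix}g_1^{AA}&g_1^{AB}\\ g_1^{BA}&g_1^{BB}\end{bmatrix}$, $G_2=\begin{bmatrix}g_2^{AA}&g_2^{AB}\\ g_2^{BA}&g_2^{BB}\end{bmatrix}$ (rows indexed by player 1's strategy, columns by player 2's), and suppose both payoffs are nontrivial, i.e. $(g_1^{AA}-g_1^{BA},\,g_1^{AB}-g_1^{BB})\ne(0,0)$ and $(g_2^{AA}-g_2^{AB},\,g_2^{BA}-g_2^{BB})\ne(0,0)$. Define $\theta_1,\theta_2$ by $\theta_1+\frac{\pi}{4}=\mathrm{arctan2}(g_1^{AA}-g_1^{BA},\,g_1^{AB}-g_1^{BB})$ and $\theta_2+\frac{\pi}{4}=\mathrm{arctan2}(g_2^{AA}-g_2^{AB},\,g_2^{BA}-g_2^{BB})$, and set \[ G^{\mathrm{equil}}_1(\theta_1)=\begin{bmatrix}\frac{1}{\sqrt2}\sin(\theta_1+\frac{\pi}{4})&\frac{1}{\sqrt2}\cos(\theta_1+\frac{\pi}{4})\\ -\frac{1}{\sqrt2}\sin(\theta_1+\frac{\pi}{4})&-\frac{1}{\sqrt2}\cos(\theta_1+\frac{\pi}{4})\end{bmatrix},\qquad G^{\mathrm{equil}}_2(\theta_2)=\begin{bmatrix}\frac{1}{\sqrt2}\sin(\theta_2+\frac{\pi}{4})&-\frac{1}{\sqrt2}\sin(\theta_2+\frac{\pi}{4})\\ \frac{1}{\sqrt2}\cos(\theta_2+\frac{\pi}{4})&-\frac{1}{\sqrt2}\cos(\theta_2+\frac{\pi}{4})\end{bmatrix}.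 \] Then the games $(G_1,G_2)$ and $(G^{\mathrm{equil}}_1(\theta_1),G^{\mathrm{equil}}_2(\theta_2))$ have the same set of Nash equilibria, the same set of correlated equilibria, and the same set of coarse correlated equilibria.
   Context: $\mathrm{arctan2}(y,x)$ is the standard two-argument arctangent, the angle $\alpha$ with $(\cos\alpha,\sin\alpha)=(x,y)/\sqrt{x^2+y^2}$. For a finite game with payoffs $G_p$ on joint strategies $a=(a_p,a_{-p})$: a joint distribution $\sigma$ is a correlated equilibrium if for every player $p$ and all $a''_p\ne a'_p$, $\sum_{a_{-p}}\sigma(a''_p,a_{-p})\big(G_p(a'_p,a_{-p})-G_p(a''_p,a_{-p})\big)\le0$; a coarse correlated equilibrium if for every $p$ and $a'_p$, $\sum_a\sigma(a)\big(G_p(a'_p,a_{-p})-G_p(a)\big)\le0$; a Nash equilibrium is a correlated equilibrium that is a product of independent marginals $\sigma(a)=\prod_q\sigma_q(a_q)$. *)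

(* Defs.v *)
From Stdlib Require Import Reals.
Open Scope R_scope.

Inductive strat : Type := SA | SB.

Definition sumS (f : strat -> R) : R := f SA + f SB.

(** A payoff matrix: [G a1 a2] is the payoff when player 1 plays [a1]
    (row) and player 2 plays [a2] (column). *)
Definition payoff := strat -> strat -> R.

(** Standard two-argument arctangent arctan2(y, x) in (-PI, PI]
    (value 0 at the origin, irrelevant here). *)
Definition atan2 (y x : R) : R :=
  if Rlt_dec 0 x then atan (y / x)
  else if Rlt_dec x 0 then
    (if Rle_dec 0 y then atan (y / x) + PI else atan (y / x) - PI)
  else if Rlt_dec 0 y then PI / 2
  else if Rlt_dec y 0 then - (PI / 2)
  else 0.

Definition is_dist (p : strat -> R) : Prop :=
  (forall a, 0 <= p a) /\ sumS p = 1.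

Definition is_joint_dist (s : strat -> strat -> R) : Prop :=
  (forall a b, 0 <= s a b) /\ sumS (fun a => sumS (fun b => s a b)) = 1.

Definition is_CE (G1 G2 : payoff) (s : strat -> strat -> R) : Prop :=
  is_joint_dist s /\
  (forall a'' a' : strat, a'' <> a' ->
     sumS (fun b => s a'' b * (G1 a' b - G1 a'' b)) <= 0) /\
  (forall b'' b' : strat, b'' <> b' ->
     sumS (fun a => s a b'' * (G2 a b' - G2 a b'')) <= 0).

Definition is_CCE (G1 G2 : payoff) (s : strat -> strat -> R) : Prop :=
  is_joint_dist s /\
  (forall a' : strat,
     sumS (fun a => sumS (fun b => s a b * (G1 a' b - G1 a b))) <= 0) /\
  (forall b' : strat,
     sumS (fun a => sumS (fun b => s a b * (G2 a b' - G2 a b))) <= 0).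

Definition is_NE (G1 G2 : payoff) (s : strat -> strat -> R) : Prop :=
  is_CE G1 G2 s /\
  exists p q : strat -> R, is_dist p /\ is_dist q /\
    forall a b, s a b = p a * q b.

Definition Gequil1 (t : R) : payoff := fun a b =>
  match a, b with
  | SA, SA => / sqrt 2 * sin (t + PI / 4)
  | SA, SB => / sqrt 2 * cos (t + PI / 4)
  | SB, SA => - (/ sqrt 2 * sin (t + PI / 4))
  | SB, SB => - (/ sqrt 2 * cos (t + PI / 4))
  end.

Definition Gequil2 (t : R) : payoff := fun a b =>
  match a, b with
  | SA, SA => / sqrt 2 * sin (t + PI / 4)
  | SA, SB => - (/ sqrt 2 * sin (t + PI / 4))
  | SB, SA => / sqrt 2 * cos (t + PI / 4)
  | SB, SB => - (/ sqrt 2 * cos (t + PI / 4))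
  end.

Definition theta1 (G1 : payoff) : R :=
  atan2 (G1 SA SA - G1 SB SA) (G1 SA SB - G1 SB SB) - PI / 4.

Definition theta2 (G2 : payoff) : R :=
  atan2 (G2 SA SA - G2 SA SB) (G2 SB SA - G2 SB SB) - PI / 4.

(* Main.v *)
Require Import Defs.
From Stdlib Require Import Reals Lra.
Open Scope R_scope.

Lemma scale_le0 c x : 0 < c -> (c * x <= 0 <-> x <= 0).
Proof. intros; split; intros; nra. Qed.

Lemma equiv_games (G1 G2 E1 E2 : payoff) c1 c2 (hc1 : 0 < c1) (hc2 : 0 < c2)
  (e1 : forall b, E1 SB b = E1 SA b - c1 * (G1 SA b - G1 SB b))
  (e2 : forall a, E2 a SB = E2 a SA - c2 * (G2 a SA - G2 a SB)) :
  (forall s, is_NE G1 G2 s <-> is_NE E1 E2 s) /\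
  (forall s, is_CE G1 G2 s <-> is_CE E1 E2 s) /\
  (forall s, is_CCE G1 G2 s <-> is_CCE E1 E2 s).
Proof.
  assert (C1 : forall (s : strat -> strat -> R) a'' a',
    sumS (fun b => s a'' b * (E1 a' b - E1 a'' b)) =
    c1 * sumS (fun b => s a'' b * (G1 a' b - G1 a'' b))).
  { intros s a'' a'; destruct a'', a'; unfold sumS; cbv beta; rewrite ?e1; ring. }
  assert (C2 : forall (s : strat -> strat -> R) b'' b',
    sumS (fun a => s a b'' * (E2 a b' - E2 a b'')) =
    c2 * sumS (fun a => s a b'' * (G2 a b' - G2 a b''))).
  { intros s b'' b'; destruct b'', b'; unfold sumS; cbv beta; rewrite ?e2; ring. }
  assert (D1 : forall (s : strat -> strat -> R) a',
    sumS (fun a => sumS (fun b => s a b * (E1 a' b - E1 a b))) =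
    c1 * sumS (fun a => sumS (fun b => s a b * (G1 a' b - G1 a b)))).
  { intros s a'; destruct a'; unfold sumS; cbv beta; rewrite ?e1; ring. }
  assert (D2 : forall (s : strat -> strat -> R) b',
    sumS (fun a => sumS (fun b => s a b * (E2 a b' - E2 a b))) =
    c2 * sumS (fun a => sumS (fun b => s a b * (G2 a b' - G2 a b)))).
  { intros s b'; destruct b'; unfold sumS; cbv beta; rewrite ?e2; ring. }
  assert (CE : forall s, is_CE G1 G2 s <-> is_CE E1 E2 s).
  { intro s; unfold is_CE; split; intros [J [H1 H2]]; split; auto; split; intros x y hxy.
    - rewrite C1; apply scale_le0; auto.
    - rewrite C2; apply scale_le0; auto.
    - rewrite <- (scale_le0 c1) by auto; rewrite <- C1; auto.
    - rewrite <- (scale_le0 c2) by auto; rewrite <- C2; auto. }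
  split; [|split]; auto.
  - intro s; unfold is_NE; rewrite CE; tauto.
  - intro s; unfold is_CCE; split; intros [J [H1 H2]]; split; auto; split; intros x.
    + rewrite D1; apply scale_le0; auto.
    + rewrite D2; apply scale_le0; auto.
    + rewrite <- (scale_le0 c1) by auto; rewrite <- D1; auto.
    + rewrite <- (scale_le0 c2) by auto; rewrite <- D2; auto.
Qed.

Lemma atan2_k y x : (y, x) <> (0, 0) ->
  exists k, 0 < k /\ sin (atan2 y x) = k * y /\ cos (atan2 y x) = k * x.
Proof.
  intro h; unfold atan2.
  assert (AT : forall z, 0 < cos (atan z) /\ sin (atan z) = z * cos (atan z)).
  { intro z; destruct (atan_bound z) as [l u].
    assert (0 < cos (atan z)) by (apply cos_gt_0; lra).
    split; auto. rewrite <- (atan_right_inv z) at 2. unfold tan. field. lra. }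
  destruct (Rlt_dec 0 x).
  { destruct (AT (y / x)) as [p q]. exists (cos (atan (y/x)) / x).
    split; [apply Rdiv_lt_0_compat; auto|]. split; [rewrite q|]; field; lra. }
  destruct (Rlt_dec x 0).
  { destruct (AT (y / x)) as [p q].
    exists (cos (atan (y/x)) / (- x)).
    split; [apply Rdiv_lt_0_compat; lra|].
    assert (SP : sin PI = 0) by apply sin_PI. assert (CP : cos PI = -1) by apply cos_PI.
    destruct (Rle_dec 0 y).
    - rewrite sin_plus, cos_plus, SP, CP, q. split; field; lra.
    - rewrite sin_minus, cos_minus, SP, CP, q. split; field; lra. }
  destruct (Rlt_dec 0 y).
  { exists (/ y). rewrite sin_PI2, cos_PI2. assert (x = 0) by lra. subst.
    split; [apply Rinv_0_lt_compat; auto|]. split; field; lra. }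
  destruct (Rlt_dec y 0).
  { exists (- / y). rewrite sin_neg, cos_neg, sin_PI2, cos_PI2. assert (x = 0) by lra. subst.
    split; [|split; field; lra]. 
    assert (0 < / - y) by (apply Rinv_0_lt_compat; lra). rewrite <- Rinv_opp. auto. }
  exfalso; apply h; f_equal; lra.
Qed.

Theorem mainTheorem3 (G1 G2 : payoff)
  (h1 : (G1 SA SA - G1 SB SA, G1 SA SB - G1 SB SB) <> (0, 0))
  (h2 : (G2 SA SA - G2 SA SB, G2 SB SA - G2 SB SB) <> (0, 0)) :
  let E1 := Gequil1 (theta1 G1) in
  let E2 := Gequil2 (theta2 G2) in
  (forall s, is_NE G1 G2 s <-> is_NE E1 E2 s) /\
  (forall s, is_CE G1 G2 s <-> is_CE E1 E2 s) /\
  (forall s, is_CCE G1 G2 s <-> is_CCE E1 E2 s).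
Proof.
  intros E1 E2.
  destruct (atan2_k _ _ h1) as [k1 [k1p [s1 c1]]].
  destruct (atan2_k _ _ h2) as [k2 [k2p [s2 c2]]].
  assert (sq : 0 < / sqrt 2) by (apply Rinv_0_lt_compat, sqrt_lt_R0; lra).
  apply (equiv_games G1 G2 E1 E2 (2 * / sqrt 2 * k1) (2 * / sqrt 2 * k2)).
  - apply Rmult_lt_0_compat; auto; lra.
  - apply Rmult_lt_0_compat; auto; lra.
  - intro b; unfold E1, Gequil1, theta1.
    replace (atan2 (G1 SA SA - G1 SB SA) (G1 SA SB - G1 SB SB) - PI / 4 + PI / 4)
      with (atan2 (G1 SA SA - G1 SB SA) (G1 SA SB - G1 SB SB)) by ring.
    rewrite s1, c1; destruct b; ring.
  - intro a; unfold E2, Gequil2, theta2.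
    replace (atan2 (G2 SA SA - G2 SA SB) (G2 SB SA - G2 SB SB) - PI / 4 + PI / 4)
      with (atan2 (G2 SA SA - G2 SA SB) (G2 SB SA - G2 SB SB)) by ring.
    rewrite s2, c2; destruct a; ring.
Qed.
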